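(* Let $p$ be a prime and let $G$ be a nontrivial finite $p$-group. Then $n_G=\exp(G)$ if and only if $G$ is cyclic, or $\exp(G)=p$, or $G$ is a dihedral $2$-group, i.e. $G\cong D_{2^{m+1}}=\langle x,y \mid x^{2^{m}}=y^2=1,\ x^y=x^{-1}\rangle$ for some integer $m\ge 1$.
   Context: For a finite group $G$ and $x\in G$, let $I_{\mathcal C}(x)=\{y\in G : \langle x,y\rangle \text{ is cyclic}\}$ (the closed neighborhood of $x$ in the enhanced power graph of $G$; it contains $1$ and $x$). For a nontrivial finite group $G$, $n_G=\max\{|I_{\mathcal C}(x)| : x\in G\setminus\{1\}\}$. $\exp(G)$ denotes the exponent of $G$. *)

(* Defs.v *)
From mathcomp Require Import all_boot all_fingroup all_solvable.
Set Implicit Arguments. Unset Strict Implicit. Unset Printing Implicit Defensive.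
Local Open Scope group_scope.

Definition IC (gT : finGroupType) (G : {set gT}) (x : gT) : {set gT} :=
  [set y in G | cyclic <<[set x; y]>>].

Definition nG (gT : finGroupType) (G : {set gT}) : nat :=
  \max_(x in G^#) #|IC G x|.

(* Main.v *)
Require Import Defs.
From mathcomp Require Import all_boot all_fingroup all_solvable.
Local Open Scope group_scope.
From mathcomp Require Import zify.
Local Open Scope group_scope.
Set Implicit Arguments. Unset Strict Implicit. Unset Printing Implicit Defensive.

Section Helpers.
Variable gT : finGroupType.
Implicit Types (G H X : {group gT}) (x y g u : gT).

Lemma cyc2_sub x y (A : {group gT}) : x \in A -> y \in A -> <<[set x; y]>> \subset A.
Proof. by move=> xA yA; rewrite gen_subG subUset !sub1set xA yA. Qed.

Lemma IC_cycle G x : x \in G -> <[x]> \subset IC G x.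
Proof.
move=> xG; apply/subsetP=> y yx; rewrite inE.
have sxG : <[x]> \subset G by rewrite cycle_subG.
rewrite (subsetP sxG) //=.
by apply: cyclicS (cycle_cyclic x); apply: cyc2_sub; rewrite ?cycle_id.
Qed.

Lemma cyc2_commute x y : cyclic <<[set x; y]>> -> commute x y.
Proof.
move/cyclic_abelian/centsP=> c; apply: c; apply: mem_gen; rewrite !inE eqxx ?orbT //.
Qed.

Lemma cyc2_inv2 x y : cyclic <<[set x; y]>> -> #[x] = 2 -> #[y] = 2 -> x = y.
Proof.
move=> cyc ox oy.
have xS : x \in <<[set x; y]>> by apply: mem_gen; rewrite !inE eqxx.
have yS : y \in <<[set x; y]>> by apply: mem_gen; rewrite !inE eqxx orbT.
have: <[x]> :==: <[y]>.
  by rewrite (eq_subG_cyclic cyc) ?cycle_subG // -!orderE ox oy.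
move/eqP=> e; have: y \in <[x]> by rewrite e cycle_id.
rewrite cycle2g ?ox // !inE => /orP[/eqP y1|/eqP //].
by move: oy; rewrite y1 order1.
Qed.

Lemma nG_ge G : G :!=: 1 -> nilpotent G -> exponent G <= nG G.
Proof.
move=> ntG nilG; have [g gG eg] := exponent_witness nilG.
have g1 : g != 1.
  apply: contra ntG => /eqP g1; apply/eqP/trivgP/subsetP => x xG.
  rewrite inE -order_eq1 -dvdn1; have := dvdn_exponent xG.
  by rewrite eg g1 order1.
rewrite /nG (leq_trans _ (leq_bigmax_cond g _)) ?inE ?g1 ?gG //.
by rewrite eg orderE; apply: subset_leq_card; apply: IC_cycle.
Qed.

Lemma nG_le G n : (forall w, w \in G^# -> #|IC G w| <= n) -> nG G <= n.
Proof. by move=> h; apply/bigmax_leqP => w /h. Qed.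

Lemma nG_leI G w : w \in G^# -> #|IC G w| <= nG G.
Proof. by move=> wG; apply: (leq_bigmax_cond w). Qed.

End Helpers.

Section Fwd.
Variable gT : finGroupType.
Implicit Types (G H X : {group gT}) (x y g u : gT).

Lemma nG_eq G : G :!=: 1 -> nilpotent G ->
  (forall w, w \in G^# -> #|IC G w| <= exponent G) -> nG G = exponent G.
Proof.
by move=> ntG nilG h; apply/eqP; rewrite eqn_leq nG_ge // nG_le.
Qed.

Lemma IC_subG G x : IC G x \subset G.
Proof. by apply/subsetP=> y; rewrite inE => /andP[]. Qed.

Lemma fwd_cyclic G : G :!=: 1 -> cyclic G -> nG G = exponent G.
Proof.
move=> ntG cG; apply: nG_eq => //; first exact: abelian_nil (cyclic_abelian cG).
by move=> w _; rewrite exponent_cyclic // subset_leq_card // IC_subG.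
Qed.

Lemma fwd_expp p G : prime p -> G :!=: 1 -> nilpotent G -> exponent G = p ->
  nG G = exponent G.
Proof.
move=> pp ntG nilG eG; apply: nG_eq => // w /setD1P[w1 wG].
have ow : #[w] = p.
  apply: nt_prime_order => //.
  have hp : exponent G %| p by rewrite eG.
  by apply/eqP; rewrite -order_dvdn -eG dvdn_exponent.
suff: IC G w \subset <[w]> by move/subset_leq_card; rewrite -orderE ow eG.
apply/subsetP=> y; rewrite inE => /andP[yG cyc].
have wC : w \in <<[set w; y]>> by apply: mem_gen; rewrite !inE eqxx.
have yC : y \in <<[set w; y]>> by apply: mem_gen; rewrite !inE eqxx orbT.
have sC : <<[set w; y]>> \subset G by apply: cyc2_sub.
have: <[w]> == <<[set w; y]>>.
  rewrite eqEcard cycle_subG wC /= -orderE ow -eG -(exponent_cyclic cyc).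
  by apply: dvdn_leq; [rewrite eG prime_gt0 | apply: exponentS].
by move/eqP->.
Qed.

Lemma fwd_dihedral G m : 1 <= m -> G \isog 'D_(2 ^ m.+1) -> nG G = exponent G.
Proof.
move=> m1 isoG.
have n1 : 1 < m.+1 by [].
have [[x y] genG [oy xy]] := generators_2dihedral n1 isoG.
have [oG Gx ox X'y] := genG.
have [[_ oX' invXX'] _ _ _ _] := dihedral2_structure n1 genG isoG.
rewrite /= in ox.
have ntG : G :!=: 1.
  by rewrite -cardG_gt1 oG (ltn_exp2l 0).
have pG : 2.-group G by rewrite /pgroup oG pnatX.
have eG : exponent G = (2 ^ m)%N.
  apply/eqP; rewrite eqn_dvd -{2}ox dvdn_exponent // andbT.
  apply/exponentP=> t tG; case: (boolP (t \in <[x]>)) => tX.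
    by apply/eqP; rewrite -order_dvdn -ox order_dvdG.
  have ot : #[t] = 2 by apply: oX'; rewrite inE tX.
  by apply/eqP; rewrite -order_dvdn ot -{1}(expn1 2) dvdn_exp2l.
apply: nG_eq => //; first exact: pgroup_nil pG.
move=> w /setD1P[w1 wG]; rewrite eG.
have sXG : <[x]> \subset G by rewrite cycle_subG.
case: (boolP (w \in <[x]>)) => wX.
  rewrite -ox orderE; apply: subset_leq_card; apply/subsetP=> t.
  rewrite inE => /andP[tG cyc]; apply: contraTT cyc => tX.
  have tX' : t \in G :\: <[x]> by rewrite inE tX.
  have ot := oX' _ tX'.
  apply/negP=> cyc.
  have c := cyc2_commute cyc.
  have winv : w ^ t = w^-1 by apply: invXX'.
  have ww : w = w^-1 by rewrite -winv /conjg c mulKg.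
  have ow : #[w] = 2.
    apply: nt_prime_order => //; by rewrite expgS expg1 {1}ww mulVg.
  by move: tX; rewrite -(cyc2_inv2 cyc ow ot) wX.
have wX' : w \in G :\: <[x]> by rewrite inE wX.
have ow := oX' _ wX'.
apply: (@leq_trans 2); last by rewrite -{1}(expn1 2) leq_exp2l.
have c2 : #|[set 1; w]| = 2 by rewrite cards2 eq_sym w1.
rewrite -c2; apply: subset_leq_card; apply/subsetP=> t.
rewrite inE => /andP[tG cyc]; rewrite !inE.
case: (eqVneq t 1) => //= t1; apply/eqP.
case: (boolP (t \in <[x]>)) => tX; last first.
  have tX' : t \in G :\: <[x]> by rewrite inE tX.
  by rewrite (cyc2_inv2 cyc ow (oX' _ tX')).
have c := cyc2_commute cyc.
have tinv : t ^ w = t^-1 by apply: invXX'.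
have tt : t = t^-1 by rewrite -tinv /conjg -c mulKg.
have ot : #[t] = 2.
  apply: nt_prime_order => //; by rewrite expgS expg1 {1}tt mulVg.
by move: wX; rewrite (cyc2_inv2 cyc ow ot) tX.
Qed.

End Fwd.

Lemma descend (P : nat -> bool) a : ~~ P 0 -> P a -> exists j, ~~ P j && P j.+1.
Proof.
elim: a => [|a IH] P0 Pa; first by rewrite Pa in P0.
case: (boolP (P a)) => Pa'; first exact: IH.
by exists a; rewrite Pa' Pa.
Qed.

Lemma NT p k : prime p -> odd p -> k ^ p = 1 %[mod p] ->
  ~~ (p * p %| \sum_(j < p) k ^ j)%N.
Proof.
move=> pp op kp.
have p1 := prime_gt1 pp.
have k1 : k %% p = 1%N.
  by rewrite -(modn_small p1) -kp fermat_little.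
set a := (k %/ p)%N.
have ka : k = (a * p + 1)%N by rewrite {1}(divn_eq k p) k1.
have C1 : forall j, exists c, (k ^ j = 1 + j * a * p + p * p * c)%N.
  elim=> [|j [c Hc]]; first by exists 0%N; rewrite expn0; lia.
  exists (j * a * a + c * (a * p + 1))%N; rewrite expnSr Hc ka; nia.
have C2 : forall n, exists d, (\sum_(j < n) k ^ j = n + a * p * 'C(n, 2) + p * p * d)%N.
  elim=> [|n [d Hd]]; first by exists 0%N; rewrite big_ord0 bin0n /=; lia.
  have [c Hc] := C1 n.
  exists (d + c)%N; rewrite big_ord_recr /= Hd Hc binS bin1. nia.
have [d Hd] := C2 p.
rewrite Hd bin2odd //; apply/negP => H.
have : (p * p %| p)%N.
  have E : (a * p * (p * p.-1./2) + p * p * d = p * p * (a * p.-1./2 + d))%N by nia.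
  by move: H; rewrite -addnA E dvdn_addl // dvdn_mulr.
move/(dvdn_leq (ltnW p1)); nia.
Qed.

Lemma four_sq k : ~~ (4 %| k * k + 1)%N.
Proof.
apply/negP => /dvdnP[t Ht].
have := divn_eq k 2; have := ltn_pmod k (isT : 0 < 2)%N.
set q := (k %/ 2)%N; set b := (k %% 2)%N => hb hk.
nia.
Qed.

Section Conv.
Variable gT : finGroupType.
Implicit Types (G H X : {group gT}) (x y g u v : gT).

Lemma conj_pow x a k : x ^ a = x ^+ k -> forall n, x ^ (a ^+ n) = x ^+ (k ^ n).
Proof.
move=> h; elim=> [|n IH]; first by rewrite expg0 conjg1 expn0 expg1.
by rewrite expgSr conjgM IH conjXg h -expgM expnS.
Qed.

Lemma pow_formula g y k : g ^ y^-1 = g ^+ k ->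
  forall n, (g * y) ^+ n = g ^+ (\sum_(j < n) k ^ j) * y ^+ n.
Proof.
move=> h; elim=> [|n IH]; first by rewrite !expg0 big_ord0 mulg1.
have hn : y ^+ n * g = g ^+ (k ^ n) * y ^+ n.
  have := conj_pow h n; rewrite expgVn /conjg invgK => <-.
  by rewrite -!mulgA mulVg mulg1.
rewrite expgSr IH big_ord_recr /= expgD -!mulgA; congr (_ * _).
by rewrite !mulgA hn -!mulgA expgSr.
Qed.

Lemma Klem G g : nG G = exponent G -> g \in G -> #[g] = exponent G ->
  forall u y, u \in <[g]> -> u != 1 -> y \in G -> u \in <[y]> -> y \in <[g]>.
Proof.
move=> hn gG og u y uX u1 yG uy.
have sXG : <[g]> \subset G by rewrite cycle_subG.
have uG : u \in G^# by rewrite !inE u1 (subsetP sXG).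
have := nG_leI uG; rewrite hn -og orderE => hle.
apply: contraLR hle => yX; rewrite -ltnNge.
have: y |: <[g]> \subset IC G u.
  rewrite subUset sub1set; apply/andP; split.
    rewrite inE yG; apply: cyclicS (cycle_cyclic y); apply: cyc2_sub => //.
    exact: cycle_id.
  apply/subsetP=> v vX; rewrite inE (subsetP sXG) //=.
  by apply: cyclicS (cycle_cyclic g); apply: cyc2_sub.
move/subset_leq_card; rewrite cardsU1 yX add1n; exact.
Qed.

End Conv.

Section Conv2.
Variable gT : finGroupType.
Implicit Types (G H X : {group gT}) (x y g u v : gT).

Lemma descend_grp (p : nat) G (A : {set gT}) h : p.-group G -> h \in G -> h \notin A -> 1 \in A ->
  exists j, (h ^+ (p ^ j) \notin A) && (h ^+ (p ^ j.+1) \in A).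
Proof.
move=> pG hG hA A1.
have [a oa] := p_natP (mem_p_elt pG hG).
apply: (@descend (fun j => h ^+ (p ^ j) \in A) a); first by rewrite expn0 expg1.
by rewrite -oa expg_order.
Qed.

Lemma conv (p : nat) G : prime p -> p.-group G -> G :!=: 1 -> nG G = exponent G ->
  ~~ cyclic G -> exponent G != p -> exists2 m, 1 <= m & G \isog 'D_(2 ^ m.+1).
Proof.
move=> pp pG ntG hn ncyc ep.
have nilG := pgroup_nil pG.
have [g gG eg] := exponent_witness nilG.
have [e oge] := p_natP (mem_p_elt pG gG).
have e2 : 1 < e.
  case: e oge => [|[|e]] oge //.
    case/negP: ntG; apply/eqP/trivgP/subsetP => x xG.
    rewrite inE -order_eq1 -dvdn1; have := dvdn_exponent xG.
    by rewrite eg oge expn0.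
  by rewrite eg oge expn1 eqxx in ep.
have K := Klem hn gG (esym eg).
have sXG : <[g]> \subset G by rewrite cycle_subG.
have pXG : <[g]> \proper G.
  rewrite properEneq sXG andbT; apply: contra ncyc => /eqP <-.
  exact: cycle_cyclic.
have pXN := nilpotent_proper_norm nilG pXG.
have g2 : g ^+ 2 != 1.
  rewrite -order_dvdn oge; apply/negP => /(dvdn_leq (isT : 0 < 2)%N).
  have p1 := prime_gt1 pp.
  have : p ^ 2 <= p ^ e by rewrite leq_exp2l.
  rewrite expnS expn1 => h1 h2.
  have : p * p <= 2 by exact: leq_trans h1 h2.
  nia.
have KA : forall y, y \in 'N_G(<[g]>) -> y \notin <[g]> -> y ^+ p \in <[g]> ->
    [/\ p = 2, y ^+ 2 = 1 & g ^ y = g^-1].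
  move=> y yN yX ypX.
  have yG : y \in G by move: yN; rewrite inE => /andP[].
  have yNX : y \in 'N(<[g]>) by move: yN; rewrite inE => /andP[].
  have yp1 : y ^+ p = 1.
    apply/eqP; apply: contraR yX => y1; apply: (K (y ^+ p)) => //.
    exact: mem_cycle.
  have [k hk] : exists k, g ^ y^-1 = g ^+ k.
    have : g ^ y^-1 \in <[g]> by rewrite memJ_norm ?groupV ?cycle_id.
    by case/cycleP => k ->; exists k.
  have hs : (p ^ e %| \sum_(j < p) k ^ j)%N.
    rewrite -oge order_dvdn.
    have F := pow_formula hk p; rewrite yp1 mulg1 in F.
    apply: contraR yX => s1.
    have : g * y \in <[g]>.
      apply: (K (g ^+ (\sum_(j < p) k ^ j))) => //.
      - exact: mem_cycle.
      - by rewrite groupM.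
      - by rewrite -F mem_cycle.
    by rewrite groupMl // cycle_id.
  have hkp : k ^ p = 1 %[mod p].
    have := conj_pow hk p; rewrite expgVn yp1 invg1 conjg1 => /eqP.
    rewrite -{1}(expg1 g) eq_expg_mod_order oge => /eqP h.
    have := congr1 (modn^~ p) h; rewrite !modn_dvdm ?dvdn_exp ?(ltnW e2) //.
  case: (even_prime pp) => p2; last first.
    have := NT pp p2 hkp; rewrite (dvdn_trans _ hs) //.
    by rewrite (_ : p * p = p ^ 2)%N ?dvdn_exp2l // expnS expn1.
  subst p; split => //.
  move: hs; rewrite !big_ord_recr big_ord0 /= expn0 expn1 add0n -oge order_dvdn.
  move=> /eqP h1.
  have yy : y^-1 = y by apply/eqP; rewrite eq_invg_mul -expg2 yp1.
  rewrite -yy hk; apply/eqP; rewrite eq_sym eq_invg_mul -expgS.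
  by rewrite -add1n h1.
have NG : 'N_G(<[g]>) \subset G by apply: subsetIl.
have [_ [h0 h0N h0X]] := properP pXN.
have [j0 /andP[j0a j0b]] := descend_grp pG (subsetP NG _ h0N) h0X (group1 _).
have j0c : (h0 ^+ (p ^ j0)) ^+ p \in <[g]> by rewrite -expgM -expnSr.
have [p2 _ _] := KA (h0 ^+ (p ^ j0)) (groupX _ h0N) j0a j0c.
subst p.
have S1 : forall h, h \in 'N_G(<[g]>) -> h \notin <[g]> -> h ^+ 2 = 1 /\ g ^ h = g^-1.
  move=> h hN hX.
  have [j /andP[ja jb]] := descend_grp pG (subsetP NG _ hN) hX (group1 _).
  case: j ja jb => [|i] ja jb.
    rewrite expn0 expg1 in ja jb.
    by have [_ ? ?] := KA h hN ja jb.
  set v := h ^+ (2 ^ i).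
  have vN : v \in 'N_G(<[g]>) by rewrite groupX.
  have wv : h ^+ (2 ^ i.+1) = v ^+ 2 by rewrite expnSr expgM.
  have wv2 : h ^+ (2 ^ i.+2) = (v ^+ 2) ^+ 2 by rewrite expnSr expgM wv.
  rewrite wv in ja; rewrite wv2 in jb.
  have [_ w1 gw] := KA (v ^+ 2) (groupX _ vN) ja jb.
  have vNX : v \in 'N(<[g]>) by move: vN; rewrite inE => /andP[].
  have [k hk] : exists k, g ^ v^-1 = g ^+ k.
    have : g ^ v^-1 \in <[g]> by rewrite memJ_norm ?groupV ?cycle_id.
    by case/cycleP => k ->; exists k.
  have := conj_pow hk 2; rewrite expgVn.
  have ww : (v ^+ 2)^-1 = v ^+ 2 by apply/eqP; rewrite eq_invg_mul -expg2 w1.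
  rewrite ww gw => /eqP; rewrite eq_invg_mul -expgS -order_dvdn oge => hd.
  have : (4 %| k * k + 1)%N.
    rewrite mulnn addn1; apply: dvdn_trans hd; rewrite (_ : 4 = 2 ^ 2)%N //.
    by rewrite dvdn_exp2l.
  by rewrite (negPf (four_sq k)).
have [y0 y0N y0X] : exists2 y0, y0 \in 'N_G(<[g]>) & y0 \notin <[g]>.
  by exists h0.
have [y0sq gy0] := S1 y0 y0N y0X.
have y0G : y0 \in G := subsetP NG _ y0N.
have gN : g \in 'N_G(<[g]>) by rewrite inE gG (subsetP (normG _)) ?cycle_id.
have S3 : forall h, h \in 'N_G(<[g]>) -> h \notin <[g]> -> h * y0 \in <[g]>.
  move=> h hN hX; apply: contraR g2 => hyX.
  have [_ ghy] := S1 _ (groupM hN y0N) hyX.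
  have [_ gh] := S1 _ hN hX.
  move: ghy; rewrite conjgM gh conjVg gy0 invgK => /eqP.
  by rewrite eq_sym eq_invg_mul -expg2 => ->.
have S4 : G \subset 'N_G(<[g]>).
  case: (boolP (G \subset 'N_G(<[g]>))) => // nsub; exfalso.
  have pN : 'N_G(<[g]>) \proper G by rewrite properE NG.
  have [_ [t tN tN']] := properP (nilpotent_proper_norm nilG pN).
  have tNN : t \in 'N('N_G(<[g]>)) by move: tN; rewrite inE => /andP[].
  have tG : t \in G by move: tN; rewrite inE => /andP[].
  have gtN : g ^ t \in 'N_G(<[g]>) by rewrite memJ_norm.
  case: (boolP (g ^ t \in <[g]>)) => gtX.
    case/negP: tN'; rewrite inE tG /=; apply/normP.
    rewrite -cycleJ; apply/eqP; rewrite eqEcard cycle_subG gtX -!orderE orderJ.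
    by rewrite leqnn.
  have [gt2 _] := S1 _ gtN gtX.
  by move: g2; rewrite -conjXg in gt2; rewrite -(conjg_eq1 _ t) gt2 eqxx.
have inN : forall h, h \in G -> h \in 'N_G(<[g]>) := fun h hG => subsetP S4 h hG.
have y0i : y0^-1 = y0 by apply/eqP; rewrite eq_invg_mul -expg2 y0sq.
have S5 : G :\: <[g]> = <[g]> :* y0.
  apply/setP => h; rewrite inE mem_rcoset y0i; apply/andP/idP.
    by case=> hX hG; apply: S3 => //; apply: inN.
  move=> hyX; have hG : h \in G.
    by rewrite -(mulgK y0 h) groupM ?groupV // (subsetP sXG).
  split=> //; apply: contra y0X => hX.
  by rewrite -(groupMl _ hX).
have cardG : #|G| = (2 ^ e.+1)%N.
  rewrite -(cardsID <[g]> G) S5 card_rcoset.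
  rewrite (setIidPr sXG) -orderE oge expnS mul2n addnn //.
have S6 : <<[set y0; g * y0]>> = G.
  apply/eqP; rewrite eqEsubset cyc2_sub ?groupM //=.
  have gH : g \in <<[set y0; g * y0]>>.
    have : g * y0 * y0^-1 \in <<[set y0; g * y0]>>.
      by rewrite groupM ?groupV ?mem_gen // !inE eqxx ?orbT.
    by rewrite mulgK.
  have y0H : y0 \in <<[set y0; g * y0]>> by rewrite mem_gen // !inE eqxx.
  have XH : <[g]> \subset <<[set y0; g * y0]>> by rewrite cycle_subG.
  apply/subsetP => h hG; case: (boolP (h \in <[g]>)) => hX.
    exact: (subsetP XH).
  have : h \in <[g]> :* y0 by rewrite -S5 inE hX.
  rewrite mem_rcoset => hy.
  rewrite -(mulgK y0 h) groupM ?groupV //; rewrite y0i in hy; exact: (subsetP XH).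
have oy0 : #[y0] = 2.
  apply: nt_prime_order => //; apply: contra y0X => /eqP ->; exact: group1.
have gy0X : g * y0 \notin <[g]> by rewrite groupMl ?cycle_id.
have ogy0 : #[g * y0] = 2.
  apply: nt_prime_order => //.
    by have [] := S1 _ (inN _ (groupM gG y0G)) gy0X.
  by apply: contra gy0X => /eqP ->; exact: group1.
have ne : y0 != g * y0.
  apply: contra g2 => /eqP hh; have : g = 1 by apply: (mulIg y0); rewrite -hh mul1g.
  by move=> ->; rewrite expg1n.
have := involutions_gen_dihedral oy0 ogy0 ne.
rewrite S6 cardG => iso.
by exists e => //; apply: ltnW.
Qed.
End Conv2.

Unset Implicit Arguments.

Theorem theorem1p1 (p : nat) (gT : finGroupType) (G : {group gT}) :
  prime p -> p.-group G -> G :!=: 1 ->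
  (nG G = exponent G <->
   [\/ cyclic G, exponent G = p
     | exists2 m : nat, 1 <= m & G \isog 'D_(2 ^ m.+1)]).
Proof.
move=> pp pG ntG; split.
  move=> hn; case: (boolP (cyclic G)) => cG; first by apply: Or31.
  case: (eqVneq (exponent G) p) => ep; first by apply: Or32.
  by apply: Or33; apply: (conv pp pG ntG hn cG ep).
case=> [cG | ep | [m m1 iso]].
- exact: fwd_cyclic.
- exact: (fwd_expp pp ntG (pgroup_nil pG) ep).
- exact: (fwd_dihedral m1 iso).
Qed.
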